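(* Let $\mathbb{X}$ be a regular CW complex equipped with an acyclic partial matching $\mu$, and let $\Sigma = \{(x_\bullet > y_\bullet)\}$ denote the collection of entrance paths of $\mathbb{X}$ which correspond to the matchings $\mu(y_\bullet) = x_\bullet$. Then $\Sigma$ is a Morse system on the entrance path category $\mathbf{Ent}\,\mathbb{X}$.
   Context: A p-category is a small category enriched over posets; $f\Rightarrow g$ denotes the order on a hom-poset and $f\circ g$ denotes composition ``$f$ then $g$''. A morphism $f:x\to y$ is an atom if it is minimal in $\mathbf{E}(x,y)$, $x=y$ implies $f=1_x$, and $g\circ h\Rightarrow f$ with $g:x\to z$, $h:z\to y$ forces $(g,h)=(1_x,f)$ or $(f,1_y)$. A p-category $\mathbf{E}$ is cellular if every nonempty hom-poset contains an atom. For a regular CW complex, $x>y$ means the closure of cell $y$ lies in the boundary of $x$; the entrance path category $\mathbf{Ent}\,\mathbb{X}$ has cells as objects, strictly descending sequences $(x=x_0>\cdots>x_k=y)$ as morphisms $x\to y$, ordered by subsequence inclusion, composed by concatenation. An acyclic partial matching is a partition of cells into $D,U,M$ with a bijection $\mu:D\to U$ such that each $d$ is a codimension-one face of $\mu(d)$ and the transitive closure of ($d\prec_\mu d'$ iff $d$ is a codimension-one face of $\mu(d')$) is a partial order. A Morse system on a cellular category $\mathbf{E}$ is a collection $\Sigma=\{f_\bullet:x_\bullet\to y_\bullet\}$ satisfying: (Exhaustion) each $f:x\to y$ in $\Sigma$ is the atom of $\mathbf{E}(x,y)$ with $x\neq y$, and no other morphism of $\Sigma$ has as source or target any $w$ with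 $\mathbf{E}(x,w)\neq\varnothing\neq\mathbf{E}(w,y)$; (Order) the transitive closure of $f_0\blacktriangleright f_1$ iff $\mathbf{E}(x_0,y_1)\neq\varnothing$ is a partial order on $\Sigma$; (Lifting) for distinct $f_0,f_1\in\Sigma$, if $g:x_0\to x_1$ and $g':y_0\to y_1$ satisfy $f_0\circ g'\Rightarrow g\circ f_1$, then there is $p:y_0\to x_1$ with $f_0\circ p\Rightarrow g$ and $g'\Rightarrow p\circ f_1$; (Switching) for distinct $f_0,f_1\in\Sigma$, if $\mathbf{E}(x_0,x_1)$ and $\mathbf{E}(y_0,y_1)$ are nonempty with atoms $h,\ell$, and some $v:x_0\to y_1$ satisfies $f_0\circ\ell\Rightarrow v$ and $h\circ f_1\Rightarrow v$, then $\mathbf{E}(y_0,x_1)$ is nonempty and its atom $q$ satisfies $f_0\circ q\circ f_1\Rightarrow v$. *)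

(* Defs.v *)
From Stdlib Require Import List Relations.
Import ListNotations.
Set Implicit Arguments.

(* p-categories: categories enriched over posets.                      *)
(* [hle f g] is the order  f => g  on a hom-poset;                     *)
(* [comp f g] is composition "f then g".                               *)
Record PCat := {
  Ob : Type;
  Hom : Ob -> Ob -> Type;
  hle : forall x y, Hom x y -> Hom x y -> Prop;
  idm : forall x, Hom x x;
  comp : forall x y z, Hom x y -> Hom y z -> Hom x z
}.
Arguments hle {p x y} _ _.
Arguments idm {p} x.
Arguments comp {p x y z} _ _.

Definition is_pcat (E : PCat) : Prop :=
  (forall x y (f : Hom E x y), hle f f) /\
  (forall x y (f g h : Hom E x y), hle f g -> hle g h -> hle f h) /\
  (forall x y (f g : Hom E x y), hle f g -> hle g f -> f = g) /\
  (forall x y (f : Hom E x y), comp (idm x) f = f) /\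
  (forall x y (f : Hom E x y), comp f (idm y) = f) /\
  (forall x y z w (f : Hom E x y) (g : Hom E y z) (h : Hom E z w),
      comp (comp f g) h = comp f (comp g h)) /\
  (forall x y z (f f' : Hom E x y) (g g' : Hom E y z),
      hle f f' -> hle g g' -> hle (comp f g) (comp f' g')).

Definition is_atom (E : PCat) (x y : Ob E) (f : Hom E x y) : Prop :=
  (forall g : Hom E x y, hle g f -> g = f) /\
  (forall e : x = y, f = eq_rect x (Hom E x) (idm x) y e) /\
  (forall z (g : Hom E x z) (h : Hom E z y), hle (comp g h) f ->
     existT (fun w => (Hom E x w * Hom E w y)%type) z (g, h)
       = existT (fun w => (Hom E x w * Hom E w y)%type) x (idm x, f)
     \/
     existT (fun w => (Hom E x w * Hom E w y)%type) z (g, h)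
       = existT (fun w => (Hom E x w * Hom E w y)%type) y (f, idm y)).

Arguments is_atom {E x y} f.

Definition cellular (E : PCat) : Prop :=
  forall x y : Ob E, inhabited (Hom E x y) -> exists f : Hom E x y, is_atom f.

Record Arr (E : PCat) := mkArr { asrc : Ob E; atgt : Ob E; amor : Hom E asrc atgt }.
Arguments asrc {E} _.
Arguments atgt {E} _.
Arguments amor {E} _.

Definition partial_order_on (A : Type) (P : A -> Prop) (R : A -> A -> Prop) : Prop :=
  (forall a, P a -> R a a) /\
  (forall a b c, P a -> P b -> P c -> R a b -> R b c -> R a c) /\
  (forall a b, P a -> P b -> R a b -> R b a -> a = b).

Definition morse_system (E : PCat) (S : Arr E -> Prop) : Prop :=
  is_pcat E /\ cellular E /\
  (* Exhaustion *)
  (forall a, S a ->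
     is_atom (amor a) /\ asrc a <> atgt a /\
     (forall b, S b -> b <> a -> forall w : Ob E,
        inhabited (Hom E (asrc a) w) -> inhabited (Hom E w (atgt a)) ->
        asrc b <> w /\ atgt b <> w)) /\
  (* Order *)
  partial_order_on S
    (clos_trans _ (fun a b => S a /\ S b /\ inhabited (Hom E (asrc a) (atgt b)))) /\
  (* Lifting *)
  (forall a0 a1, S a0 -> S a1 -> a0 <> a1 ->
     forall (g : Hom E (asrc a0) (asrc a1)) (g' : Hom E (atgt a0) (atgt a1)),
       hle (comp (amor a0) g') (comp g (amor a1)) ->
       exists p : Hom E (atgt a0) (asrc a1),
         hle (comp (amor a0) p) g /\ hle g' (comp p (amor a1))) /\
  (* Switching *)
  (forall a0 a1, S a0 -> S a1 -> a0 <> a1 ->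
     forall (h : Hom E (asrc a0) (asrc a1)) (l : Hom E (atgt a0) (atgt a1)),
       is_atom h -> is_atom l ->
       forall v : Hom E (asrc a0) (atgt a1),
         hle (comp (amor a0) l) v -> hle (comp h (amor a1)) v ->
         inhabited (Hom E (atgt a0) (asrc a1)) /\
         (forall q : Hom E (atgt a0) (asrc a1), is_atom q ->
            hle (comp (comp (amor a0) q) (amor a1)) v)).

Arguments morse_system E S : clear implicits.

(* Regular CW complexes, through their face poset.      *)
(* [cgt x y] : x > y, i.e. the closure of cell y lies in the boundary  *)
(* of cell x;  [cdim x] : the dimension of cell x.                     *)
Record RegCW := {
  cell : Type;
  cgt : cell -> cell -> Prop;
  cdim : cell -> nat;
  cgt_irrefl : forall x, ~ cgt x x;
  cgt_trans : forall x y z, cgt x y -> cgt y z -> cgt x z;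
  cgt_dim : forall x y, cgt x y -> cdim y < cdim x
}.
Arguments cgt {r} _ _.
Arguments cdim {r} _.

Definition codim1_face (X : RegCW) (d x : cell X) : Prop :=
  cgt x d /\ cdim x = S (cdim d).

Arguments codim1_face {X} d x.

Definition acyclic_partial_matching (X : RegCW) (D U M : cell X -> Prop)
  (mu : cell X -> cell X) : Prop :=
  (forall c, D c \/ U c \/ M c) /\
  (forall c, ~ (D c /\ U c)) /\ (forall c, ~ (D c /\ M c)) /\
  (forall c, ~ (U c /\ M c)) /\
  (forall d, D d -> U (mu d)) /\
  (forall d d', D d -> D d' -> mu d = mu d' -> d = d') /\
  (forall u, U u -> exists d, D d /\ mu d = u) /\
  (forall d, D d -> codim1_face d (mu d)) /\
  partial_order_on D
    (clos_trans _ (fun d d' => D d /\ D d' /\ codim1_face d (mu d'))).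

(* A morphism x -> y is a sequence (x = x_0 > x_1 > ... > x_k = y),    *)
(* stored as x :: eseq with eseq = [x_1; ...; x_k].                    *)
Section Ent.
Variable X : RegCW.

Fixpoint desc (x : cell X) (s : list (cell X)) : Prop :=
  match s with
  | [] => True
  | z :: s' => cgt x z /\ desc z s'
  end.

Fixpoint lastc (x : cell X) (s : list (cell X)) : cell X :=
  match s with
  | [] => x
  | z :: s' => lastc z s'
  end.

Record EntHom (x y : cell X) := {
  eseq : list (cell X);
  edesc : desc x eseq;
  elast : lastc x eseq = y
}.

Inductive subseq {A : Type} : list A -> list A -> Prop :=
  | subseq_nil : forall l, subseq [] l
  | subseq_keep : forall a l l', subseq l l' -> subseq (a :: l) (a :: l')
  | subseq_skip : forall a l l', subseq l l' -> subseq l (a :: l').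

Definition ent_le (x y : cell X) (f g : EntHom x y) : Prop :=
  subseq (x :: eseq f) (x :: eseq g).

Definition ent_id (x : cell X) : EntHom x x :=
  {| eseq := []; edesc := I; elast := eq_refl |}.

Lemma lastc_app (s t : list (cell X)) (x : cell X) :
  lastc x (s ++ t) = lastc (lastc x s) t.
Proof. revert x; induction s as [|z s IH]; intro x; simpl; auto. Qed.

Lemma desc_app (s t : list (cell X)) (x : cell X) :
  desc x s -> desc (lastc x s) t -> desc x (s ++ t).
Proof.
  revert x; induction s as [|z s IH]; intros x Hs Ht; simpl in *; auto.
  destruct Hs as [H1 H2]; split; auto.
Qed.

Lemma ent_comp_desc (x y z : cell X) (f : EntHom x y) (g : EntHom y z) :
  desc x (eseq f ++ eseq g).
Proof.
  apply desc_app; [exact (edesc f)|]. rewrite (elast f). exact (edesc g).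
Qed.

Lemma ent_comp_last (x y z : cell X) (f : EntHom x y) (g : EntHom y z) :
  lastc x (eseq f ++ eseq g) = z.
Proof. rewrite lastc_app, (elast f). exact (elast g). Qed.

Definition ent_comp (x y z : cell X) (f : EntHom x y) (g : EntHom y z) : EntHom x z :=
  {| eseq := eseq f ++ eseq g; edesc := ent_comp_desc f g; elast := ent_comp_last f g |}.

End Ent.

Definition Ent (X : RegCW) : PCat :=
  {| Ob := cell X; Hom := @EntHom X; hle := @ent_le X; idm := @ent_id X;
     comp := @ent_comp X |}.

Definition matching_system (X : RegCW) (D : cell X -> Prop) (mu : cell X -> cell X)
  (a : Arr (Ent X)) : Prop :=
  D (atgt a) /\ asrc a = mu (atgt a) /\ eseq (amor a) = [atgt a].
Arguments matching_system X D mu a : clear implicits.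
Arguments acyclic_partial_matching X D U M mu : clear implicits.

(* Main.v *)
Require Import Defs.
From Stdlib Require Import List Relations Lia ProofIrrelevance.
Import ListNotations.

Lemma subseq_refl {A} (l : list A) : subseq l l.
Proof. induction l; constructor; auto. Qed.

Lemma subseq_trans {A} (l1 l2 l3 : list A) : subseq l1 l2 -> subseq l2 l3 -> subseq l1 l3.
Proof.
  intros H12 H23; revert l1 H12; induction H23; intros l1 H12.
  - inversion H12; constructor.
  - inversion H12; subst; try constructor; auto; apply subseq_skip; auto.
  - apply subseq_skip; auto.
Qed.

Lemma subseq_length {A} (l l' : list A) : subseq l l' -> length l <= length l'.
Proof. induction 1; simpl; lia. Qed.

Lemma subseq_eq_len {A} (l l' : list A) : subseq l l' -> length l' <= length l -> l = l'.
Proof.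
  induction 1; simpl; intro Hl.
  - destruct l; simpl in *; auto; lia.
  - f_equal; apply IHsubseq; lia.
  - apply subseq_length in H; lia.
Qed.

Lemma subseq_in {A} (l l' : list A) z : subseq l l' -> In z l -> In z l'.
Proof. induction 1; simpl; intuition. Qed.

Lemma subseq_app_l {A} (l m k : list A) : subseq l m -> subseq l (k ++ m).
Proof. induction k; simpl; auto. intro; apply subseq_skip; auto. Qed.

Lemma subseq_app {A} (l l' m m' : list A) : subseq l l' -> subseq m m' -> subseq (l ++ m) (l' ++ m').
Proof.
  induction 1; simpl; intro Hm.
  - apply subseq_app_l; auto.
  - apply subseq_keep; auto.
  - apply subseq_skip; auto.
Qed.

Lemma subseq_split {A} (a : A) l L : subseq (a :: l) L ->
  exists m1 m2, L = m1 ++ a :: m2 /\ subseq l m2.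
Proof.
  induction L as [|b L IH]; intro H; inversion H; subst.
  - exists [], L; auto.
  - destruct (IH H2) as (m1 & m2 & E & Hs). exists (b :: m1), m2; subst; auto.
Qed.

Lemma subseq_cons_inv {A} (a : A) l l' : subseq (a :: l) (a :: l') -> ~ In a l' -> subseq l l'.
Proof.
  intros H Hn; inversion H; subst; auto.
  exfalso; apply Hn; eapply subseq_in; eauto; simpl; auto.
Qed.

Section L.
Variable X : RegCW.

Lemma desc_in x s z : desc X x s -> In z s -> cgt x z.
Proof.
  revert x; induction s as [|w s IH]; simpl; intros x Hd Hi; [contradiction|].
  destruct Hd as [H1 H2]; destruct Hi as [<-|Hi]; auto.
  eapply cgt_trans; eauto.
Qed.

Lemma desc_notin x s : desc X x s -> ~ In x s.
Proof. intros Hd Hi; eapply (cgt_irrefl X x), desc_in; eauto. Qed.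

Lemma desc_app_inv x s t : desc X x (s ++ t) -> desc X x s /\ desc X (lastc X x s) t.
Proof.
  revert x; induction s as [|w s IH]; simpl; intros x Hd; auto.
  destruct Hd as [H1 H2]; destruct (IH _ H2); auto.
Qed.

Lemma lastc_snoc x s w : lastc X x (s ++ [w]) = w.
Proof. rewrite lastc_app; reflexivity. Qed.

Lemma desc_lastc x s : desc X x s -> s = [] \/ cgt x (lastc X x s).
Proof.
  revert x; induction s as [|w s IH]; simpl; intros x Hd; auto.
  right; destruct Hd as [H1 H2]; destruct (IH _ H2) as [->|H]; simpl; auto.
  eapply cgt_trans; eauto.
Qed.

Lemma hom_ge x y (f : EntHom X x y) : x = y \/ cgt x y.
Proof.
  destruct f as [s d l]; subst y; destruct (desc_lastc _ _ d) as [->|H]; simpl; auto.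
Qed.

Lemma EntHom_eq x y (f g : EntHom X x y) : eseq f = eseq g -> f = g.
Proof.
  destruct f as [s d l], g as [s' d' l']; simpl; intro; subst s'.
  f_equal; apply proof_irrelevance.
Qed.

Lemma hom_xx_nil x (f : EntHom X x x) : eseq f = [].
Proof.
  destruct f as [s d l]; simpl; destruct (desc_lastc _ _ d) as [->|H]; auto.
  rewrite l in H; destruct (cgt_irrefl _ _ H).
Qed.

Lemma all_xx_eq x (f g : EntHom X x x) : f = g.
Proof. apply EntHom_eq; rewrite !hom_xx_nil; auto. Qed.

Definition mk1 x y (H : cgt x y) : EntHom X x y :=
  {| eseq := [y]; edesc := conj H I; elast := eq_refl |}.

Lemma ent_le_seq x y (f g : EntHom X x y) : ent_le f g -> subseq (eseq f) (eseq g).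
Proof. intro H; eapply subseq_cons_inv; eauto. apply desc_notin, edesc. Qed.

End L.

Section L2.
Variable X : RegCW.

Lemma atom_id x : @is_atom (Ent X) x x (ent_id X x).
Proof.
  split; [|split].
  - intros; apply all_xx_eq.
  - intros; apply all_xx_eq.
  - intros z g h H. cbn in H. unfold ent_le in H. simpl in H.
    apply subseq_length in H; simpl in H; rewrite length_app in H.
    destruct g as [gs gd gl], h as [hs hd hl]; simpl in *.
    destruct gs; simpl in *; [|lia]. subst z.
    left. f_equal. f_equal; apply all_xx_eq.
Qed.

Lemma atom_mk1 x y (Hc : cgt x y) : @is_atom (Ent X) x y (mk1 X x y Hc).
Proof.
  assert (Hne : x <> y) by (intro; subst; eapply cgt_irrefl; eauto).
  split; [|split].
  - intros g Hg. cbn in Hg. unfold ent_le in Hg. simpl in Hg.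
    apply EntHom_eq. simpl.
    destruct g as [gs gd gl]; simpl in *.
    destruct gs as [|a gs]; [simpl in gl; congruence|].
    apply subseq_eq_len in Hg; [congruence|simpl; lia].
  - intro e; congruence.
  - intros z g h H. cbn in H. unfold ent_le in H. simpl in H.
    destruct g as [gs gd gl], h as [hs hd hl]; simpl in *.
    assert (Hgh : gs ++ hs = [y]).
    { destruct (gs ++ hs) as [|a l] eqn:E.
      - apply app_eq_nil in E; destruct E; subst; simpl in *; congruence.
      - apply subseq_eq_len in H; [congruence|simpl; lia]. }
    destruct gs as [|a gs]; simpl in *.
    + subst z. subst hs. left. f_equal. f_equal.
      * apply all_xx_eq.
      * apply EntHom_eq; reflexivity.
    + injection Hgh as -> Hgh. apply app_eq_nil in Hgh; destruct Hgh; subst; simpl in *.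
      right. f_equal. f_equal.
      * apply EntHom_eq; reflexivity.
      * apply all_xx_eq.
Qed.

Lemma atom_form x y (f : EntHom X x y) : @is_atom (Ent X) x y f -> x <> y -> eseq f = [y].
Proof.
  intros [_ [_ A]] Hne.
  destruct f as [s d l]; simpl.
  destruct s as [|z s]; [simpl in l; congruence|].
  destruct s as [|w s]; [simpl in l; congruence|].
  destruct d as [Hxz Hd].
  pose (g := mk1 X x z Hxz).
  pose (h := {| eseq := w :: s; edesc := Hd; elast := l |} : EntHom X z y).
  specialize (A z g h).
  assert (Heq : ent_comp g h = {| eseq := z :: w :: s; edesc := conj Hxz Hd; elast := l |}) by (apply EntHom_eq; reflexivity).
  assert (Hle : @hle (Ent X) x y (@comp (Ent X) x z y g h) {| eseq := z :: w :: s; edesc := conj Hxz Hd; elast := l |}).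
  { cbn. rewrite Heq. unfold ent_le; apply subseq_refl. }
  destruct (A Hle) as [E|E]; apply (f_equal (@projT1 _ _)) in E; simpl in E.
  - subst z; destruct (cgt_irrefl _ _ Hxz).
  - subst z. pose proof (hom_xx_nil X y h) as Hn. unfold h in Hn. simpl in Hn. discriminate.
Qed.

End L2.

Section L3.
Variable X : RegCW.

Lemma lastc_app_cons x s a t : lastc X x (s ++ a :: t) = lastc X a t.
Proof. rewrite lastc_app; reflexivity. Qed.

Lemma desc_before x m1 a m2 z : desc X x (m1 ++ a :: m2) -> In z m1 -> cgt z a.
Proof.
  intros Hd Hi. destruct (in_split _ _ Hi) as (k1 & k2 & ->).
  rewrite <- app_assoc in Hd. simpl in Hd.
  apply desc_app_inv in Hd. destruct Hd as [_ [_ Hd]].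
  eapply desc_in; eauto. apply in_or_app; simpl; auto.
Qed.

Lemma desc_after x m1 a m2 z : desc X x (m1 ++ a :: m2) -> In z m2 -> cgt a z.
Proof.
  intros Hd Hi. apply desc_app_inv in Hd. destruct Hd as [_ [_ Hd]].
  eapply desc_in; eauto.
Qed.

Lemma pcat : is_pcat (Ent X).
Proof.
  unfold is_pcat; cbn. split; [|split; [|split; [|split; [|split; [|split]]]]].
  - intros; apply subseq_refl.
  - intros x y f g h; apply subseq_trans.
  - intros x y f g H1 H2. apply EntHom_eq.
    pose proof (subseq_eq_len _ _ H1 (subseq_length _ _ H2)). congruence.
  - intros; apply EntHom_eq; reflexivity.
  - intros; apply EntHom_eq; simpl; apply app_nil_r.
  - intros; apply EntHom_eq; simpl; symmetry; apply app_assoc.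
  - intros x y z f f' g g' H1 H2. unfold ent_le; simpl. apply subseq_keep.
    apply subseq_app; eapply ent_le_seq; eauto.
Qed.

Lemma cell_ent : cellular (Ent X).
Proof.
  intros x y [f]. destruct (hom_ge X x y f) as [<-|H].
  - exists (ent_id X x); apply atom_id.
  - exists (mk1 X x y H); apply atom_mk1.
Qed.

End L3.

Lemma exists_last_or_nil {A} (l : list A) : l = [] \/ exists l' a, l = l' ++ [a].
Proof.
  destruct l as [|b l]; [auto|right].
  destruct (exists_last (l := b :: l) ltac:(discriminate)) as (l' & a & E); eauto.
Qed.

Theorem proposition3p6 (X : RegCW) (D U M : cell X -> Prop) (mu : cell X -> cell X) :
  acyclic_partial_matching X D U M mu ->
  morse_system (Ent X) (matching_system X D mu).
Proof.
  intros (Hpart & HDU & HDM & HUM & HmuU & Hinj & Hsurj & Hcod & Hpo).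
  set (S := matching_system X D mu).
  assert (arr_eq : forall a b, S a -> S b -> atgt a = atgt b -> a = b).
  { intros [sa ta ma] [sb tb mb]; unfold S, matching_system; simpl.
    intros (Da & Esa & Ema) (Db & Esb & Emb) E. subst. f_equal.
    apply EntHom_eq; congruence. }
  assert (DU : forall c, D c -> U c -> False) by (intros c H1 H2; apply (HDU c); auto).
  assert (dimc : forall a b c : cell X, cgt a b -> cgt b c -> codim1_face c a -> False).
  { intros a b c H1 H2 [_ H3]. apply cgt_dim in H1. apply cgt_dim in H2. lia. }
  unfold morse_system. split; [apply pcat|]. split; [apply cell_ent|].
  split; [|split; [|split]].
  -
    intros a Sa. pose proof Sa as Sa'.
    destruct a as [x y f]; destruct Sa as (Dy & Ex & Ef); simpl in *. subst x.
    destruct (Hcod y Dy) as [Hc Hdim].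
    split; [|split].
    + assert (f = mk1 X _ _ Hc) as -> by (apply EntHom_eq; auto). apply atom_mk1.
    + intro E; rewrite E in Hc; eapply cgt_irrefl; eauto.
    + intros b Sb Hba w [h1] [h2].
      assert (Hw : w = mu y \/ w = y).
      { destruct (hom_ge X _ _ h1) as [E1|E1]; auto.
        destruct (hom_ge X _ _ h2) as [E2|E2]; auto.
        exfalso; exact (dimc _ _ _ E1 E2 (conj Hc Hdim)). }
      assert (Hyb : atgt b <> y) by (intro E; apply Hba; apply arr_eq; auto).
      pose proof Sb as Sb'.
      destruct b as [xb yb fb]; destruct Sb as (Dyb & Exb & _); simpl in *. subst xb.
      destruct Hw as [->| ->]; split.
      * intro E; apply Hinj in E; auto.
      * intro E; apply (DU yb); auto; rewrite E; auto.
      * intro E; apply (DU y); auto; rewrite <- E; auto.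
      * auto.
  -
    set (P := fun d d' => D d /\ D d' /\ codim1_face d (mu d')).
    set (R := fun a b => S a /\ S b /\ inhabited (Hom (Ent X) (asrc a) (atgt b))).
    assert (key : forall a b, clos_trans _ R a b ->
      cdim (atgt b) <= cdim (atgt a) /\
      (cdim (atgt b) = cdim (atgt a) -> clos_trans _ P (atgt b) (atgt a))).
    { intros a b H; induction H as [a b Hab|a c b _ [IH1 IH2] _ [IH3 IH4]].
      - destruct Hab as (Sa & Sb & [h]).
        destruct Sa as (Da & Ea & _). destruct Sb as (Db & _ & _).
        rewrite Ea in h. destruct (Hcod _ Da) as [Hc Hd].
        destruct (hom_ge X _ _ h) as [E|E].
        + exfalso; rewrite E in Hc. apply (DU (atgt b)); auto. rewrite <- E; auto.
        + pose proof (cgt_dim _ _ _ E). split; [lia|].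
          intro Hdd. apply t_step. split; auto. split; auto. split; auto. lia.
      - split; [lia|]. intro Hdd. eapply t_trans; [apply IH4|apply IH2]; lia. }
    destruct Hpo as [_ [_ Hanti]].
    split; [|split].
    + intros a Sa. apply t_step. split; auto. split; auto. constructor. exact (amor a).
    + intros a b c _ _ _ H1 H2. eapply t_trans; eauto.
    + intros a b Sa Sb H1 H2. apply arr_eq; auto.
      destruct (key _ _ H1) as [d1 k1]. destruct (key _ _ H2) as [d2 k2].
      apply Hanti.
      * destruct Sa; auto.
      * destruct Sb; auto.
      * apply k2; lia.
      * apply k1; lia.
  -
    intros a0 a1 S0 S1 Hne g g' H.
    assert (Hy : atgt a0 <> atgt a1) by (intro E; apply Hne; apply arr_eq; auto).
    destruct a0 as [x0 y0 f0], a1 as [x1 y1 f1].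
    destruct S0 as (D0 & E0 & F0), S1 as (D1 & E1 & F1); simpl in *.
    apply ent_le_seq in H. simpl in H. rewrite F0, F1 in H. simpl in H.
    destruct (subseq_split _ _ _ H) as (m1 & m2 & Em & Hs).
    destruct (exists_last_or_nil m2) as [->|(m2' & w & ->)].
    + apply app_inj_tail in Em. destruct Em; congruence.
    + rewrite app_comm_cons, app_assoc in Em. apply app_inj_tail in Em.
      destruct Em as [Eg <-].
      assert (Hd : desc X y0 m2').
      { pose proof (edesc g) as Hg. rewrite Eg in Hg.
        replace (m1 ++ y0 :: m2') with ((m1 ++ [y0]) ++ m2') in Hg
          by (rewrite <- app_assoc; reflexivity).
        apply desc_app_inv in Hg. rewrite lastc_snoc in Hg. tauto. }
      assert (Hl : lastc X y0 m2' = x1).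
      { pose proof (elast g) as Hg. rewrite Eg, lastc_app_cons in Hg. exact Hg. }
      exists (Build_EntHom X y0 m2' Hd Hl). cbn. unfold ent_le; simpl.
      rewrite F0, Eg. simpl. split.
      * apply subseq_keep. apply subseq_app_l. apply subseq_refl.
      * apply subseq_keep. rewrite F1; exact Hs.
  -
    intros a0 a1 S0 S1 Hne h l Ha Hl v H1 H2.
    assert (Hy : atgt a0 <> atgt a1) by (intro E; apply Hne; apply arr_eq; auto).
    destruct a0 as [x0 y0 f0], a1 as [x1 y1 f1].
    destruct S0 as (D0 & E0 & F0), S1 as (D1 & E1 & F1); simpl in *. subst x0 x1.
    assert (Hx : mu y0 <> mu y1) by (intro E; apply Hinj in E; auto).
    pose proof (atom_form X _ _ l Hl Hy) as El.
    pose proof (atom_form X _ _ h Ha Hx) as Eh.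
    apply ent_le_seq in H1. apply ent_le_seq in H2. simpl in H1, H2.
    rewrite F0, El in H1. rewrite Eh, F1 in H2. simpl in H1, H2.
    destruct (hom_ge X _ _ l) as [E|Hyy]; [contradiction|].
    destruct (Hcod _ D1) as [Hc1 Hd1].
    destruct (subseq_split _ _ _ H1) as (m1 & m2 & Em & _).
    assert (Hin : In (mu y1) (eseq v)) by (eapply subseq_in; [exact H2|]; simpl; auto).
    pose proof (edesc v) as Hdv. rewrite Em in Hdv.
    assert (Hgt : cgt y0 (mu y1)).
    { rewrite Em in Hin. apply in_app_or in Hin. destruct Hin as [Hin|[Hin|Hin]].
      - exfalso. refine (dimc (mu y1) y0 y1 _ Hyy (conj Hc1 Hd1)). eapply desc_before; eauto.
      - exfalso. apply (DU y0); auto. rewrite Hin; apply HmuU; auto.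
      - eapply desc_after; eauto. }
    split; [constructor; exact (mk1 X _ _ Hgt)|].
    intros q Hq.
    assert (Hq' : y0 <> mu y1) by (intro E; rewrite E in Hgt; eapply cgt_irrefl; eauto).
    pose proof (atom_form X _ _ q Hq Hq') as Eq.
    cbn. unfold ent_le; simpl. rewrite F0, Eq, F1, Em. simpl.
    apply subseq_keep. apply subseq_app_l. apply subseq_keep.
    assert (Hin2 : In (mu y1) m2).
    { rewrite Em in Hin. apply in_app_or in Hin. destruct Hin as [Hin|[Hin|Hin]]; auto.
      - exfalso. apply desc_before with (z := mu y1) in Hdv; auto.
        eapply cgt_irrefl; eapply cgt_trans; eauto.
      - exfalso; rewrite Hin in Hq'; auto. }
    destruct (in_split _ _ Hin2) as (n1 & n2 & ->).
    pose proof (elast v) as Hlv. rewrite Em, !lastc_app_cons in Hlv.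
    destruct (exists_last_or_nil n2) as [->|(n2' & w & ->)].
    + simpl in Hlv. rewrite Hlv in Hc1. exfalso; eapply cgt_irrefl; eauto.
    + rewrite lastc_snoc in Hlv. subst w.
      apply subseq_app_l. apply subseq_keep. apply subseq_app_l. apply subseq_refl.
Qed.
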